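(* Let $(V,\eta)$ be as in the context. For any three states $s,s_1,s_2\in\mathcal S$ there exists a unique $\vec\beta\in T_s\mathcal S$ with $\eta(\vec\beta,\vec\beta)<1$ such that $B(s,\vec\beta)s_1=s_2$. It is the following rational function of $(s,s_1,s_2)$: $$\vec\beta(s,s_1,s_2)=\frac{\gamma_1+\gamma_2}{\gamma_1^2+\gamma_2^2+\gamma_{12}-1}\bigl(s_2-s_1-(\gamma_2-\gamma_1)s\bigr),$$ where $\gamma_1=-\eta(s,s_1)$, $\gamma_2=-\eta(s,s_2)$, $\gamma_{12}=-\eta(s_1,s_2)$. The corresponding boost $B(s,s_1,s_2):=B(s,\vec\beta(s,s_1,s_2))$ is likewise rational in $(s,s_1,s_2)$, namely, with $s_{21}:=s_2-s_1$, $$B(s,s_1,s_2)=\mathrm{id}_V+\frac{2(1-\gamma_{12})\,s\otimes s+s_{21}\otimes s_{21}+2\gamma_1\,s\otimes s_{21}-2\gamma_2\,s_{21}\otimes s}{1+2\gamma_1\gamma_2-\gamma_{12}}.$$ Moreover $\vec\beta$ is Lorentz equivariant: for every linear map $L:V\to V$ preserving $\eta$ and mapping $\mathcal S$ onto itself, $\vec\beta(Ls,Ls_1,Ls_2)=L\,\vec\beta(s,s_1,s_2)$.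
   Context: $V$ is a 4-dimensional real vector space with a symmetric non-degenerate bilinear form $\eta$ of signature $(-,+,+,+)$. The set of states of motion $\mathcal S$ is one fixed connected component of $\{v\in V:\eta(v,v)=-1\}$ (the future unit timelike vectors). For $s\in\mathcal S$, $T_s\mathcal S:=\{u\in V:\eta(u,s)=0\}$, on which $\eta$ is positive definite. Endomorphisms are written via $(u\otimes v)(w):=\eta(v,w)\,u$, and $u\wedge v:=u\otimes v-v\otimes u$. For $s\in\mathcal S$ and $\vec\beta\in T_s\mathcal S$ with $\beta^2:=\eta(\vec\beta,\vec\beta)<1$, $\beta>0$, put $\vec n=\vec\beta/\beta$, $\gamma=(1-\beta^2)^{-1/2}$; the boost relative to $s$ with velocity $\vec\beta$ is $$B(s,\vec\beta)=\mathrm{id}_V+(\gamma-1)(-s\otimes s+\vec n\otimes\vec n)+\beta\gamma(s\otimes\vec n-\vec n\otimes s),$$ and $B(s,0)=\mathrm{id}_V$. *)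

(* Defs.v *)
From HB Require Import structures.
From mathcomp Require Import all_boot all_order all_algebra.
Set Implicit Arguments. Unset Strict Implicit. Unset Printing Implicit Defensive.
Import Order.TTheory GRing.Theory Num.Theory.
Local Open Scope ring_scope.

(* (V, eta): a real vector space V with a symmetric bilinear form eta such that
   V has a basis e_0..e_3 (so dim V = 4) in which eta = diag(-1,1,1,1);
   this encodes "4-dimensional, symmetric, non-degenerate, signature (-,+,+,+)". *)
Definition minkowski_space (R : rcfType) (V : lmodType R) (eta : V -> V -> R) : Prop :=
  [/\ (forall (a : R) (u v w : V), eta (a *: u + v) w = a * eta u w + eta v w),
      (forall u v : V, eta u v = eta v u)
    & exists e : 'I_4 -> V,
        (forall v : V, exists! c : 'I_4 -> R, v = \sum_(i < 4) c i *: e i) /\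
        (forall i j : 'I_4, eta (e i) (e j) =
            if i == j then (if i == ord0 then -1 else 1) else 0)].

(* The fixed connected component S of {v | eta v v = -1}: the component
   containing the fixed unit timelike vector t, i.e. {v | eta v v = -1, eta v t < 0}. *)
Definition is_state (R : rcfType) (V : lmodType R) (eta : V -> V -> R) (t v : V) : Prop :=
  eta v v = -1 /\ eta v t < 0.

Definition tangent (R : rcfType) (V : lmodType R) (eta : V -> V -> R) (s u : V) : Prop :=
  eta u s = 0.

Definition tens (R : rcfType) (V : lmodType R) (eta : V -> V -> R) (u v w : V) : V :=
  eta v w *: u.

Definition boost (R : rcfType) (V : lmodType R) (eta : V -> V -> R) (s b : V) (w : V) : V :=
  if eta b b == 0 then w else
  let beta := Num.sqrt (eta b b) in
  let n := beta^-1 *: b in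
  let g := (Num.sqrt (1 - beta ^+ 2))^-1 in
  w + (g - 1) *: (- tens eta s s w + tens eta n n w)
    + (beta * g) *: (tens eta s n w - tens eta n s w).

Definition beta_formula (R : rcfType) (V : lmodType R) (eta : V -> V -> R) (s s1 s2 : V) : V :=
  let g1 := - eta s s1 in
  let g2 := - eta s s2 in
  let g12 := - eta s1 s2 in
  ((g1 + g2) / (g1 ^+ 2 + g2 ^+ 2 + g12 - 1)) *: (s2 - s1 - (g2 - g1) *: s).

Definition boost_formula (R : rcfType) (V : lmodType R) (eta : V -> V -> R) (s s1 s2 : V) (w : V) : V :=
  let g1 := - eta s s1 in
  let g2 := - eta s s2 in
  let g12 := - eta s1 s2 in
  let s21 := s2 - s1 in
  w + (1 + 2 * g1 * g2 - g12)^-1 *: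
        ((2 * (1 - g12)) *: tens eta s s w + tens eta s21 s21 w
         + (2 * g1) *: tens eta s s21 w - (2 * g2) *: tens eta s21 s w).

(* Main.v *)
Require Import Defs.
From HB Require Import structures.
From mathcomp Require Import all_boot all_order all_algebra.
From mathcomp Require Import ring lra.
Import Order.TTheory GRing.Theory Num.Theory.
Local Open Scope ring_scope.

Lemma scal (R : rcfType) (a0 a1 a2 a3 c0 c1 c2 c3 : R) :
  -a0*a0+a1*a1+a2*a2+a3*a3 = -1 -> -c0*a0+c1*a1+c2*a2+c3*a3 = 0 ->
  0 <= -c0*c0+c1*c1+c2*c2+c3*c3 /\
  (-c0*c0+c1*c1+c2*c2+c3*c3 = 0 -> [/\ c0 = 0, c1 = 0, c2 = 0 & c3 = 0]).
Proof.
move=> ha hc.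
set S := c1*c1+c2*c2+c3*c3.
set A := a1*a1+a2*a2+a3*a3.
set p := c1*a1+c2*a2+c3*a3.
set Q := (c1*a2-c2*a1)^+2 + (c1*a3-c3*a1)^+2 + (c2*a3-c3*a2)^+2.
have hQ : 0 <= Q by rewrite /Q; do 2?[apply: addr_ge0]; exact: sqr_ge0.
have hS : 0 <= S by rewrite /S -!expr2; do 2?[apply: addr_ge0]; exact: sqr_ge0.
have e1 : a0*a0 - 1 - A = 0 by rewrite /A; lra.
have e2 : c0*a0 - p = 0 by rewrite /p; lra.
have key : a0*a0*(S-c0*c0) = S + Q.
  apply/eqP; rewrite -subr_eq0; apply/eqP.
  have -> : a0*a0*(S-c0*c0) - (S + Q) = S*(a0*a0 - 1 - A) - (c0*a0 - p)*(c0*a0 + p).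
    by rewrite /S /A /p /Q; ring.
  by rewrite e1 e2; ring.
have ha0 : 1 <= a0*a0.
  have : 0 <= A by rewrite /A -!expr2; do 2?[apply: addr_ge0]; exact: sqr_ge0.
  lra.
have hge : 0 <= S - c0*c0.
  have h1 : 0 <= a0*a0*(S-c0*c0) by rewrite key; lra.
  rewrite pmulr_rge0 // in h1; lra.
have -> : -c0*c0+c1*c1+c2*c2+c3*c3 = S - c0*c0 by rewrite /S; ring.
split => // h0.
have hS0 : S = 0.
  have : a0*a0*(S-c0*c0) = 0 by rewrite h0 mulr0.
  rewrite key => hSQ. lra.
have hc0 : c0*c0 = 0 by lra.
move: hS0; rewrite /S => hS0.
have z1 : c1 * c1 = 0 by nra.
have z2 : c2 * c2 = 0 by nra.
have z3 : c3 * c3 = 0 by nra.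
have sq0 (y : R) : y * y = 0 -> y = 0 by move/eqP; rewrite mulf_eq0 orbb => /eqP.
by split; apply: sq0.
Qed.
Lemma uniq_scal (R : rcfType) (b g g1 c : R) : g^+2*(1-b^+2) = 1 -> 0 < g ->
  2*(g1 + (g*g1+b*g*c))*((g-1)*c+b*g*g1) = b*((g1+(g*g1+b*g*c))^+2 + ((g-1)*c+b*g*g1)^+2).
Proof.
move=> hrel hg.
set x := g1 + (g*g1+b*g*c); set mm := (g-1)*c+b*g*g1.
have hM : mm*(1+g) = b*g*x.
  apply/eqP; rewrite -subr_eq0; apply/eqP.
  have -> : mm*(1+g) - b*g*x = c*(g^+2*(1-b^+2) - 1) by rewrite /mm /x; ring.
  by rewrite hrel subrr mulr0.
have h1g : (1+g)^+2 != 0 by rewrite sqrf_eq0 gt_eqF // ltr_pwDr.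
apply: (mulIf h1g).
have -> : 2*x* mm*(1+g)^+2 = 2*x*(mm*(1+g))*(1+g) by ring.
have -> : b*(x^+2+mm^+2)*(1+g)^+2 = b*(x^+2*(1+g)^+2 + (mm*(1+g))^+2) by ring.
rewrite hM.
apply/eqP; rewrite -subr_eq0; apply/eqP.
have -> : 2 * x * (b * g * x) * (1 + g) - b * (x ^+ 2 * (1 + g) ^+ 2 + (b * g * x) ^+ 2)
   = b*x^+2*(g^+2*(1-b^+2) - 1) by ring.
by rewrite hrel subrr mulr0.
Qed.

Section Basics.
Variables (R : rcfType) (V : lmodType R) (eta : V -> V -> R).
Hypothesis hlin : forall (a : R) (u v w : V), eta (a *: u + v) w = a * eta u w + eta v w.
Hypothesis hsym : forall u v : V, eta u v = eta v u.

Lemma etaDl u v w : eta (u + v) w = eta u w + eta v w.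
Proof. by rewrite -[u]scale1r hlin mul1r scale1r. Qed.
Lemma eta0l w : eta 0 w = 0.
Proof. have h := etaDl 0 0 w; rewrite addr0 in h. by apply: (addrI (eta 0 w)); rewrite addr0 -h. Qed.
Lemma etaZl a u w : eta (a *: u) w = a * eta u w.
Proof. by rewrite -[a *: u]addr0 hlin eta0l addr0. Qed.
Lemma etaNl u w : eta (- u) w = - eta u w.
Proof. by rewrite -scaleN1r etaZl mulN1r. Qed.
Lemma etaDr u v w : eta w (u + v) = eta w u + eta w v.
Proof. by rewrite !(hsym w) etaDl. Qed.
Lemma etaZr a u w : eta w (a *: u) = a * eta w u.
Proof. by rewrite !(hsym w) etaZl. Qed.
Lemma etaNr u w : eta w (- u) = - eta w u.
Proof. by rewrite !(hsym w) etaNl. Qed.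
Lemma eta0r w : eta w 0 = 0.
Proof. by rewrite hsym eta0l. Qed.

Definition i0 : 'I_4 := @Ordinal 4 0 erefl.
Definition i1 : 'I_4 := @Ordinal 4 1 erefl.
Definition i2 : 'I_4 := @Ordinal 4 2 erefl.
Definition i3 : 'I_4 := @Ordinal 4 3 erefl.

Lemma sum4 (F : 'I_4 -> V) : \sum_(i < 4) F i = F i0 + F i1 + F i2 + F i3.
Proof.
rewrite !big_ord_recr big_ord0 /= add0r.
by congr (_ + _ + _ + _); congr F; apply: val_inj.
Qed.

Variable e : 'I_4 -> V.
Hypothesis he : forall i j : 'I_4, eta (e i) (e j) =
            if i == j then (if i == ord0 then -1 else 1) else 0.

Lemma eta_coords (c d : 'I_4 -> R) :
  eta (\sum_(i < 4) c i *: e i) (\sum_(i < 4) d i *: e i) =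
  - c i0 * d i0 + c i1 * d i1 + c i2 * d i2 + c i3 * d i3.
Proof.
rewrite !sum4 !(etaDl, etaDr, etaZl, etaZr) !he /=.
ring.
Qed.
Hypothesis hb : forall v : V, exists! c : 'I_4 -> R, v = \sum_(i < 4) c i *: e i.

Lemma pos s u : eta s s = -1 -> eta u s = 0 -> 0 <= eta u u /\ (eta u u = 0 -> u = 0).
Proof.
have [cs [hs _]] := hb s; have [cu [hu _]] := hb u.
move=> h1 h2.
have E1 : eta s s = - cs i0 * cs i0 + cs i1 * cs i1 + cs i2 * cs i2 + cs i3 * cs i3.
  by rewrite hs eta_coords.
have E2 : eta u s = - cu i0 * cs i0 + cu i1 * cs i1 + cu i2 * cs i2 + cu i3 * cs i3.
  by rewrite hu hs eta_coords.
have E3 : eta u u = - cu i0 * cu i0 + cu i1 * cu i1 + cu i2 * cu i2 + cu i3 * cu i3.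
  by rewrite hu eta_coords.
rewrite E1 in h1; rewrite E2 in h2; rewrite E3.
have h2' : - cu i0 * cs i0 + cu i1 * cs i1 + cu i2 * cs i2 + cu i3 * cs i3 = 0 by [].
have [h3 h4] := @scal R _ _ _ _ _ _ _ _ h1 h2.
split => //.
move=> h0; have [z0 z1 z2 z3] := h4 h0.
by rewrite hu sum4 z0 z1 z2 z3 !scale0r !addr0.
Qed.

Lemma eta_inj u v : (forall z, eta u z = eta v z) -> u = v.
Proof.
move=> h; apply/eqP; rewrite -subr_eq0; apply/eqP.
have hw z : eta (u - v) z = 0 by rewrite etaDl etaNl h subrr.
have [c [hc _]] := hb (u - v).
have hz i : eta (u - v) (e i) = 0 := hw (e i).
have c0 : c i0 = 0.
  have := hz i0; rewrite hc sum4 !(etaDl, etaZl) !he /= => H; lra.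
have c1 : c i1 = 0.
  have := hz i1; rewrite hc sum4 !(etaDl, etaZl) !he /= => H; lra.
have c2 : c i2 = 0.
  have := hz i2; rewrite hc sum4 !(etaDl, etaZl) !he /= => H; lra.
have c3 : c i3 = 0.
  have := hz i3; rewrite hc sum4 !(etaDl, etaZl) !he /= => H; lra.
by rewrite hc sum4 c0 c1 c2 c3 !scale0r !addr0.
Qed.

Ltac expand := rewrite ?(etaDl, etaDr, etaZl, etaZr, etaNl, etaNr, eta0l, eta0r).

Lemma neg t s s1 : eta t t = -1 -> eta s s = -1 -> eta s t < 0 ->
  eta s1 s1 = -1 -> eta s1 t < 0 -> eta s s1 < 0.
Proof.
move=> ht hs hst hs1 hs1t.
set a := - eta s t; set a1 := - eta s1 t.
have ha : 0 < a by rewrite /a oppr_gt0.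
have ha1 : 0 < a1 by rewrite /a1 oppr_gt0.
have hv : eta (a1 *: s - a *: s1) t = 0 by expand; rewrite /a /a1; ring.
have [hp _] := pos t _ ht hv.
have hvv : eta (a1 *: s - a *: s1) (a1 *: s - a *: s1)
   = - a1^+2 - a^+2 - 2 * a * a1 * eta s s1.
  by expand; rewrite hs hs1 (hsym s1 s); ring.
rewrite hvv in hp.
have hq : 0 < a^+2 by rewrite exprn_gt0.
have hq1 : 0 < a1^+2 by rewrite exprn_gt0.
have hm : (2*a*a1) * eta s s1 < 0 by lra.
by rewrite pmulr_rlt0 ?mulr_gt0 // in hm.
Qed.

Lemma boost_dform s d w (r x : R) : eta s s = -1 -> eta d s = 0 -> eta d d = r^+2 ->
  0 < r -> r < x ->
  boost eta s ((2*x/(x^+2+r^+2)) *: d) w =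
  w + (2/(x^+2-r^+2)) *: ((-r^+2*eta s w + x*eta d w) *: s + (eta d w - x*eta s w) *: d).
Proof.
move=> hs hds hdd hr hrx.
have hx : 0 < x by lra.
have hP : 0 < x^+2 + r^+2 by rewrite addr_gt0 // exprn_gt0.
have hM : 0 < x^+2 - r^+2 by rewrite !expr2; nra.
set k := 2*x/(x^+2+r^+2).
have hk : 0 < k by rewrite /k divr_gt0 // mulr_gt0.
have hbb : eta (k*:d) (k*:d) = (k*r)^+2 by expand; rewrite hdd; ring.
rewrite /boost hbb.
have -> : ((k*r)^+2 == 0) = false.
  by apply/negbTE; rewrite sqrf_eq0 mulf_neq0 // gt_eqF.
rewrite sqrtr_sqr ger0_norm; last by rewrite mulr_ge0 ?ltW.
have h1 : 1 - (k*r)^+2 = ((x^+2-r^+2)/(x^+2+r^+2))^+2.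
  rewrite /k; field; by rewrite gt_eqF.
rewrite h1 sqrtr_sqr ger0_norm; last by rewrite divr_ge0 ?ltW.
apply: eta_inj => z.
rewrite /tens; expand.
rewrite /k; field.
by rewrite (gt_eqF hM) (gt_eqF hP) (gt_eqF hr) (gt_eqF hx).
Qed.
End Basics.


Theorem mainTheorem3 (R : rcfType) (V : lmodType R) (eta : V -> V -> R) (t : V)
  (hV : minkowski_space eta) (ht : eta t t = -1)
  (s s1 s2 : V) (hs : is_state eta t s) (hs1 : is_state eta t s1) (hs2 : is_state eta t s2) :
  [/\ exists! b : V, [/\ tangent eta s b, eta b b < 1 & boost eta s b s1 = s2],
      [/\ tangent eta s (beta_formula eta s s1 s2),
          eta (beta_formula eta s s1 s2) (beta_formula eta s s1 s2) < 1
        & boost eta s (beta_formula eta s s1 s2) s1 = s2],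
      (forall w : V, boost eta s (beta_formula eta s s1 s2) w = boost_formula eta s s1 s2 w)
    & forall L : {linear V -> V},
        (forall u v : V, eta (L u) (L v) = eta u v) ->
        (forall v : V, is_state eta t v -> is_state eta t (L v)) ->
        (forall v : V, is_state eta t v -> exists2 u : V, is_state eta t u & L u = v) ->
        beta_formula eta (L s) (L s1) (L s2) = L (beta_formula eta s s1 s2)].
Proof.
case: hV => hlin hsym [e [hb he]].
have DL := @etaDl R V eta hlin.
have ZL := @etaZl R V eta hlin.
have NL := @etaNl R V eta hlin.
have DR := @etaDr R V eta hlin hsym.
have ZR := @etaZr R V eta hlin hsym.
have NR := @etaNr R V eta hlin hsym.
have Z0L := @eta0l R V eta hlin.
have Z0R := @eta0r R V eta hlin hsym.
have Pos := @pos R V eta hlin hsym e he hb.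
have Inj := @eta_inj R V eta hlin e he hb.
have Bd := @boost_dform R V eta hlin hsym e he hb.
case: hs => hss hst; case: hs1 => hs11 hs1t; case: hs2 => hs22 hs2t.
have hg1 : 0 < - eta s s1 by rewrite oppr_gt0; exact: (@neg R V eta hlin hsym e he hb t).
have hg2 : 0 < - eta s s2 by rewrite oppr_gt0; exact: (@neg R V eta hlin hsym e he hb t).
set g1 := - eta s s1 in hg1 *; set g2 := - eta s s2 in hg2 *; set g12 := - eta s1 s2.
have hL : forall L : {linear V -> V},
        (forall u v : V, eta (L u) (L v) = eta u v) ->
        beta_formula eta (L s) (L s1) (L s2) = L (beta_formula eta s s1 s2).
  move=> L hLe; rewrite /beta_formula /=.
  by rewrite !hLe [RHS]linearZ [in RHS]linearB [in RHS]linearB [in RHS]linearZ.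
have hd : eta (s2 - s1 - (- eta s s2 - - eta s s1) *: s) s = 0 by rewrite ?(DL, DR, ZL, ZR, NL, NR, Z0L, Z0R); rewrite ?(hsym s1 s) ?(hsym s2 s) ?(hsym s2 s1) ?hss ?hs11 ?hs22; ring.
have hE : eta (s2 - s1 - (- eta s s2 - - eta s s1) *: s) (s2 - s1 - (- eta s s2 - - eta s s1) *: s) = 2 * (- eta s1 s2) - 2 + ((- eta s s2) - (- eta s s1)) ^+ 2 by rewrite ?(DL, DR, ZL, ZR, NL, NR, Z0L, Z0R); rewrite ?(hsym s1 s) ?(hsym s2 s) ?(hsym s2 s1) ?hss ?hs11 ?hs22; ring.
have [hE0 hEz] := Pos s _ hss hd.
have hX : 0 < ((- eta s s1) + (- eta s s2)) by rewrite addr_gt0.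
have hQ : 0 < (1 + 2 * (- eta s s1) * (- eta s s2) - (- eta s1 s2)).
  have hv : eta ((- eta s s2) *: s1 + (- eta s s1) *: s2 - (2 * (- eta s s1) * (- eta s s2)) *: s) s = 0 by rewrite ?(DL, DR, ZL, ZR, NL, NR, Z0L, Z0R); rewrite ?(hsym s1 s) ?(hsym s2 s) ?(hsym s2 s1) ?hss ?hs11 ?hs22; ring.
  have [hv0 _] := Pos s _ hss hv.
  have hvv : eta ((- eta s s2) *: s1 + (- eta s s1) *: s2 - (2 * (- eta s s1) * (- eta s s2)) *: s) ((- eta s s2) *: s1 + (- eta s s1) *: s2 - (2 * (- eta s s1) * (- eta s s2)) *: s) = - (- eta s s1) ^+ 2 - (- eta s s2) ^+ 2 - 2 * (- eta s s1) * (- eta s s2) * (- eta s1 s2) + 4 * (- eta s s1) ^+ 2 * (- eta s s2) ^+ 2.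
    by rewrite ?(DL, DR, ZL, ZR, NL, NR, Z0L, Z0R); rewrite ?(hsym s1 s) ?(hsym s2 s) ?(hsym s2 s1) ?hss ?hs11 ?hs22; ring.
  rewrite hvv in hv0.
  have hp : 0 < 2 * (- eta s s1) * (- eta s s2) by rewrite !mulr_gt0.
  have hq1 : 0 < (- eta s s1) ^+ 2 by rewrite exprn_gt0.
  have hq2 : 0 < (- eta s s2) ^+ 2 by rewrite exprn_gt0.
  have hm : 0 < (2 * (- eta s s1) * (- eta s s2)) * (1 + 2 * (- eta s s1) * (- eta s s2) - (- eta s1 s2)) by lra.
  by rewrite pmulr_rgt0 in hm.
have hDD : 0 < ((- eta s s1) ^+ 2 + (- eta s s2) ^+ 2 + (- eta s1 s2) - 1).
  have : 0 < ((- eta s s1) + (- eta s s2)) ^+ 2 by rewrite exprn_gt0.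
  rewrite hE in hE0. lra.
have hDD2 : 0 < ((- eta s s1) + (- eta s s2)) ^+ 2 + (2 * (- eta s1 s2) - 2 + ((- eta s s2) - (- eta s s1)) ^+ 2) by lra.
have hbf : beta_formula eta s s1 s2 = (((- eta s s1) + (- eta s s2)) / ((- eta s s1) ^+ 2 + (- eta s s2) ^+ 2 + (- eta s1 s2) - 1)) *: (s2 - s1 - (- eta s s2 - - eta s s1) *: s) by [].
have hB3 : forall w, boost eta s (beta_formula eta s s1 s2) w = boost_formula eta s s1 s2 w.
  have [E0|Epos] : (s2 - s1 - (- eta s s2 - - eta s s1) *: s) = 0 \/ 0 < eta (s2 - s1 - (- eta s s2 - - eta s s1) *: s) (s2 - s1 - (- eta s s2 - - eta s s1) *: s).
    by move: hE0; rewrite le_eqVlt => /orP [/eqP h|h]; [left; apply: hEz; rewrite h | right].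
  - have hs2e : s2 = s1 + ((- eta s s2) - (- eta s s1)) *: s.
      apply: Inj => z; have := f_equal (fun v => eta v z) E0 => /= hz.
      move: hz; rewrite ?(DL, DR, ZL, ZR, NL, NR, Z0L, Z0R) => hz; lra.
    have hY : ((- eta s s2) - (- eta s s1)) = 0.
      have := hs22; rewrite {1 2}hs2e; rewrite ?(DL, DR, ZL, ZR, NL, NR, Z0L, Z0R); rewrite ?(hsym s1 s) ?(hsym s2 s) ?(hsym s2 s1) ?hss ?hs11 ?hs22 => h.
      have : ((- eta s s2) - (- eta s s1)) * (((- eta s s2) - (- eta s s1)) + 2 * (- eta s s1)) = 0 by lra.
      move/eqP; rewrite mulf_eq0 => /orP[/eqP //|/eqP h2].
      exfalso; lra.
    have e21 : s2 = s1 by rewrite hs2e hY scale0r addr0.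
    move=> w; rewrite hbf e21 !subrr scale0r subr0 scaler0 /boost Z0L eqxx /=.
    apply: Inj => z; rewrite /boost_formula /tens /=; rewrite ?(DL, DR, ZL, ZR, NL, NR, Z0L, Z0R); rewrite ?hs11; ring.
  - set r := Num.sqrt (eta (s2 - s1 - (- eta s s2 - - eta s s1) *: s) (s2 - s1 - (- eta s s2 - - eta s s1) *: s)).
    have hr : 0 < r by rewrite sqrtr_gt0.
    have hr2 : eta (s2 - s1 - (- eta s s2 - - eta s s1) *: s) (s2 - s1 - (- eta s s2 - - eta s s1) *: s) = r ^+ 2 by rewrite sqr_sqrtr // ltW.
    have hrx : r < ((- eta s s1) + (- eta s s2)).
      have h : ((- eta s s1) + (- eta s s2)) ^+ 2 - r ^+ 2 = 2 * (1 + 2 * (- eta s s1) * (- eta s s2) - (- eta s1 s2)) by rewrite -hr2 hE; ring.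
      nra.
    have hbf' : beta_formula eta s s1 s2 = (2 * ((- eta s s1) + (- eta s s2)) / (((- eta s s1) + (- eta s s2)) ^+ 2 + r ^+ 2)) *: (s2 - s1 - (- eta s s2 - - eta s s1) *: s).
      rewrite hbf; congr (_ *: _); rewrite -hr2 hE; field.
      by rewrite (gt_eqF hDD2) (gt_eqF hDD).
    move=> w; rewrite hbf' (Bd s _ w r _ hss hd hr2 hr hrx).
    rewrite -hr2; apply: Inj => z; rewrite /boost_formula /tens /=; rewrite ?(DL, DR, ZL, ZR, NL, NR, Z0L, Z0R); rewrite ?(hsym s1 s) ?(hsym s2 s) ?(hsym s2 s1) ?hss ?hs11 ?hs22.
    field.
    rewrite (gt_eqF hQ) /=; apply: lt0r_neq0; lra.
have hex : [/\ tangent eta s (beta_formula eta s s1 s2),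
          eta (beta_formula eta s s1 s2) (beta_formula eta s s1 s2) < 1
        & boost eta s (beta_formula eta s s1 s2) s1 = s2].
  split.
  + by rewrite /tangent hbf ZL hd mulr0.
  + have h1 : 1 - eta (beta_formula eta s s1 s2) (beta_formula eta s s1 s2) = ((2 * (1 + 2 * (- eta s s1) * (- eta s s2) - (- eta s1 s2))) / (((- eta s s1) + (- eta s s2)) ^+ 2 + (2 * (- eta s1 s2) - 2 + ((- eta s s2) - (- eta s s1)) ^+ 2))) ^+ 2.
      rewrite hbf; rewrite ?(DL, DR, ZL, ZR, NL, NR, Z0L, Z0R); rewrite ?(hsym s1 s) ?(hsym s2 s) ?(hsym s2 s1) ?hss ?hs11 ?hs22; field.
      by rewrite (gt_eqF hDD2) (gt_eqF hDD).
    have : 0 < ((2 * (1 + 2 * (- eta s s1) * (- eta s s2) - (- eta s1 s2))) / (((- eta s s1) + (- eta s s2)) ^+ 2 + (2 * (- eta s1 s2) - 2 + ((- eta s s2) - (- eta s s1)) ^+ 2))) ^+ 2.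
      by rewrite exprn_gt0 // divr_gt0 // mulr_gt0.
    rewrite -h1. lra.
  + rewrite hB3; apply: Inj => z; rewrite /boost_formula /tens /=; rewrite ?(DL, DR, ZL, ZR, NL, NR, Z0L, Z0R); rewrite ?(hsym s1 s) ?(hsym s2 s) ?(hsym s2 s1) ?hss ?hs11 ?hs22.
    field.
    by rewrite gt_eqF.
split => //; last by move=> L hLe _ _; apply: hL.
exists (beta_formula eta s s1 s2); split => // b [hbs hbb1 hB].
have [hb0 hbz] := Pos s b hss hbs.
have [B0|Bpos] : b = 0 \/ 0 < eta b b.
  by move: hb0; rewrite le_eqVlt => /orP [/eqP h|h]; [left; apply: hbz; rewrite h | right].
  move: hB; rewrite B0 /boost Z0L eqxx /= => e12.
  by rewrite hbf -e12 !subrr scale0r subr0 scaler0.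
move: hB; rewrite /boost (gt_eqF Bpos) /=.
set be := Num.sqrt (eta b b).
have hbe : 0 < be by rewrite sqrtr_gt0.
have hbe2 : be ^+ 2 = eta b b by rewrite sqr_sqrtr // ltW.
set q := Num.sqrt (1 - be ^+ 2).
have hq : 0 < q by rewrite sqrtr_gt0 hbe2 subr_gt0.
have hq2 : q ^+ 2 = 1 - be ^+ 2 by rewrite sqr_sqrtr // hbe2 subr_ge0 ltW.
set ga := q^-1.
have hga : 0 < ga by rewrite invr_gt0.
have hrel : ga ^+ 2 * (1 - be ^+ 2) = 1 by rewrite -hq2 /ga; field; by rewrite (gt_eqF hq).
move=> hB.
set c := be^-1 * eta b s1.
have hsb : eta s b = 0 by rewrite hsym.
have hG2 : (- eta s s2) = ga * (- eta s s1) + be * ga * c.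
  rewrite -hB /tens /c; rewrite ?(DL, DR, ZL, ZR, NL, NR, Z0L, Z0R); rewrite ?(hsym s1 s) ?(hsym s2 s) ?(hsym s2 s1) ?hss ?hs11 ?hs22; rewrite ?hsb; field; by rewrite (gt_eqF hbe).
set mm := (ga - 1) * c + be * ga * (- eta s s1).
have hdm : (s2 - s1 - (- eta s s2 - - eta s s1) *: s) = (mm * be^-1) *: b.
  apply: Inj => z; rewrite hG2 -hB /tens /mm /c; rewrite ?(DL, DR, ZL, ZR, NL, NR, Z0L, Z0R); rewrite ?(hsym s1 s) ?(hsym s2 s) ?(hsym s2 s1) ?hss ?hs11 ?hs22; rewrite ?hsb; field; by rewrite (gt_eqF hbe).
have hEm : eta (s2 - s1 - (- eta s s2 - - eta s s1) *: s) (s2 - s1 - (- eta s s2 - - eta s s1) *: s) = mm ^+ 2.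
  rewrite hdm; rewrite ?(DL, DR, ZL, ZR, NL, NR, Z0L, Z0R); rewrite -hbe2; field; by rewrite (gt_eqF hbe).
have hkey := @uniq_scal R be ga (- eta s s1) c hrel hga.
have hX' : ((- eta s s1) + (- eta s s2)) = (- eta s s1) + (ga * (- eta s s1) + be * ga * c) by rewrite hG2.
have hDDe : ((- eta s s1) ^+ 2 + (- eta s s2) ^+ 2 + (- eta s1 s2) - 1) = (((- eta s s1) + (- eta s s2)) ^+ 2 + mm ^+ 2) / 2 by rewrite -hEm hE; field.
rewrite hbf hdm scalerA hDDe hX'.
rewrite [X in X *: b](_ : _ = 1) ?scale1r //.
rewrite hX' in hX.
set XX := (- eta s s1 + (ga * - eta s s1 + be * ga * c)).
have hpos : 0 < XX ^+ 2 + mm ^+ 2.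
  have : 0 < XX ^+ 2 by rewrite exprn_gt0.
  have : 0 <= mm ^+ 2 by rewrite sqr_ge0.
  lra.
apply/eqP; rewrite -subr_eq0.
have -> : XX / ((XX ^+ 2 + mm ^+ 2) / 2) * (mm / be) - 1
   = (2 * XX * mm - be * (XX ^+ 2 + mm ^+ 2)) / (be * (XX ^+ 2 + mm ^+ 2)).
  by field; rewrite (gt_eqF hbe) (gt_eqF hpos).
by rewrite /XX /mm hkey subrr mul0r.
Qed.
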